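(* Let $1<\beta\le2$ and let $x\in(0,1)$ be non-simple. (1) For every $y\in(0,1)$ with $y<x$, writing $N=N(x,y)$, we have $x-y\ge \tau_\beta^N(x)/\beta^N$. (2) For every $z\in(0,1)$ with $z>x$, writing $N=N(x,z)$, we have $z-x\ge (1-\tau_\beta^N(x))/\beta^N$.
   Context: Fix $1<\beta\le 2$. The beta-map is $\tau_\beta(x)=\beta x-[\beta x]$ on $[0,1]$, where $[y]$ is the integer part of $y$. The digits are $g_n(x)=[\beta\,\tau_\beta^{n-1}(x)]\in\{0,1\}$ for $n\ge1$ and $x\in[0,1)$, so that $x=\sum_{n\ge1}g_n(x)\beta^{-n}$. A number $x\in[0,1]$ is called simple if $\tau_\beta^{n}(x)=1/\beta$ for some $n\ge0$. For $x\ne y$ in $[0,1]$, the orbit separation time is $N(x,y)=\min\{i\ge1:\ g_i(x)\neq g_i(y)\}$. *)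

(* Defs.v *)
From Stdlib Require Import Reals Lra.
Open Scope R_scope.

(* integer part [y] (floor); Stdlib's Int_part y = up y - 1 is the floor *)
Definition ipart (y : R) : R := IZR (Int_part y).

Definition tau (beta x : R) : R := beta * x - ipart (beta * x).

Fixpoint tau_iter (beta : R) (n : nat) (x : R) : R :=
  match n with
  | O => x
  | S m => tau beta (tau_iter beta m x)
  end.

Definition digit (beta : R) (n : nat) (x : R) : R :=
  ipart (beta * tau_iter beta (n - 1) x).

Definition simple (beta x : R) : Prop :=
  exists n : nat, tau_iter beta n x = / beta.

Definition is_sep_time (beta x y : R) (N : nat) : Prop :=
  (1 <= N)%nat /\ digit beta N x <> digit beta N y /\
  (forall i : nat, (1 <= i < N)%nat -> digit beta i x = digit beta i y).

(* Main.v *)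
Require Import Defs.
From Stdlib Require Import Reals Lra Lia ZArith.
Open Scope R_scope.

Lemma diff_lem (beta x y : R) (M : nat) : 0 < beta ->
  (forall i : nat, (1 <= i < S M)%nat -> digit beta i x = digit beta i y) ->
  forall k, (k <= M)%nat ->
  x - y = (tau_iter beta k x - tau_iter beta k y) / beta ^ k.
Proof.
  intros Hb Hd k. induction k as [|k IH]; intros Hk.
  - simpl. field.
  - assert (E := Hd (S k) ltac:(lia)). unfold digit in E.
    replace (S k - 1)%nat with k in E by lia.
    rewrite IH by lia. simpl tau_iter. unfold tau. rewrite E.
    assert (0 < beta ^ k) by (apply pow_lt; lra).
    simpl pow. field. lra.
Qed.

Lemma ipart_spec r : ipart r <= r /\ r < ipart r + 1.
Proof. unfold ipart. destruct (base_Int_part r). lra. Qed.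

Lemma ipart_sep a b : a < b -> ipart a <> ipart b -> ipart a + 1 <= ipart b.
Proof.
  intros H Hne. destruct (ipart_spec a), (ipart_spec b).
  unfold ipart in *.
  assert (Int_part a < Int_part b + 1)%Z.
  { apply lt_IZR. rewrite plus_IZR. simpl. lra. }
  assert (Int_part a <> Int_part b) by (intro e; apply Hne; now rewrite e).
  assert (Hz : (Int_part a + 1 <= Int_part b)%Z) by lia.
  apply IZR_le in Hz. rewrite plus_IZR in Hz. simpl in Hz. lra.
Qed.

Lemma core (beta x y : R) (M : nat) : 1 < beta ->
  x - y = (tau_iter beta M x - tau_iter beta M y) / beta ^ M ->
  y < x -> ipart (beta * tau_iter beta M x) <> ipart (beta * tau_iter beta M y) ->
  x - y >= tau_iter beta (S M) x / beta ^ (S M) /\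
  x - y >= (1 - tau_iter beta (S M) y) / beta ^ (S M).
Proof.
  intros Hb E Hlt Hne.
  set (u := tau_iter beta M x) in *. set (v := tau_iter beta M y) in *.
  assert (P : 0 < beta ^ M) by (apply pow_lt; lra).
  assert (Huv : v < u).
  { assert (u - v = (x - y) * beta ^ M) by (rewrite E; field; lra).
    assert (0 < (x - y) * beta ^ M) by (apply Rmult_lt_0_compat; lra). lra. }
  assert (Hs := ipart_sep (beta * v) (beta * u) ltac:(nra) (not_eq_sym Hne)).
  destruct (ipart_spec (beta * u)), (ipart_spec (beta * v)).
  simpl tau_iter. fold u v. unfold tau. simpl pow. rewrite E.
  split.
  - assert (D : (u - v) / beta ^ M - (beta * u - ipart (beta * u)) / (beta * beta ^ M)
       = (ipart (beta * u) - beta * v) / (beta * beta ^ M)) by (field; lra).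
    assert (0 <= (ipart (beta * u) - beta * v) / (beta * beta ^ M)).
    { unfold Rdiv; apply Rmult_le_pos; [nra|apply Rlt_le, Rinv_0_lt_compat; nra]. }
    lra.
  - assert (D : (u - v) / beta ^ M - (1 - (beta * v - ipart (beta * v))) / (beta * beta ^ M)
       = (beta * u - 1 - ipart (beta * v)) / (beta * beta ^ M)) by (field; lra).
    assert (0 <= (beta * u - 1 - ipart (beta * v)) / (beta * beta ^ M)).
    { unfold Rdiv; apply Rmult_le_pos; [nra|apply Rlt_le, Rinv_0_lt_compat; nra]. }
    lra.
Qed.

Theorem lemma2 (beta x : R) :
  1 < beta <= 2 -> 0 < x < 1 -> ~ simple beta x ->
  (forall (y : R) (N : nat), 0 < y < 1 -> y < x -> is_sep_time beta x y N ->
     x - y >= tau_iter beta N x / beta ^ N) /\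
  (forall (z : R) (N : nat), 0 < z < 1 -> z > x -> is_sep_time beta x z N ->
     z - x >= (1 - tau_iter beta N x) / beta ^ N).
Proof.
  intros Hb Hx _. split.
  - intros y N Hy Hlt [HN [Hne Hd]].
    destruct N as [|M]; [lia|].
    assert (E := diff_lem beta x y M ltac:(lra) Hd M (le_n _)).
    unfold digit in Hne. replace (S M - 1)%nat with M in Hne by lia.
    exact (proj1 (core beta x y M ltac:(lra) E Hlt Hne)).
  - intros z N Hz Hlt [HN [Hne Hd]].
    destruct N as [|M]; [lia|].
    assert (Hd' : forall i, (1 <= i < S M)%nat -> digit beta i z = digit beta i x)
      by (intros; symmetry; auto).
    assert (E := diff_lem beta z x M ltac:(lra) Hd' M (le_n _)).
    unfold digit in Hne. replace (S M - 1)%nat with M in Hne by lia.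
    exact (proj2 (core beta z x M ltac:(lra) E Hlt (not_eq_sym Hne))).
Qed.
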